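(* Let $\Delta\subset\mathbb{S}^2$ be a planar flag complex satisfying the Standing Assumptions, and let $T$ be a finite tree encoding the structure of $\Delta$ in the following sense: (1) each vertex $v$ of $T$ is associated to a prime full subcomplex $\Delta_v$ of $\Delta$, with $\Delta_v\neq\Delta_{v'}$ for $v\neq v'$ and $\bigcup_{v}\Delta_v=\Delta$; (2) each edge $e$ of $T$ is associated to an induced 4-cycle $\Delta_e$ of $\Delta$, with $\Delta_e\neq\Delta_{e'}$ for $e\neq e'$; (3) vertices $v_1,v_2$ are the endpoints of an edge $e$ iff $\Delta_{v_1}\cap\Delta_{v_2}=\Delta_e$, and if $V_1,V_2$ are the vertex sets of the two components of $T$ minus the midpoint of $e$, then $(\bigcup_{v\in V_1}\Delta_v,\bigcup_{v\in V_2}\Delta_v)$ is a strong visual decomposition of $\Delta$ along $\Delta_e$. Then for each region $R$ of $\mathbb{S}^2-\Delta$ there is a vertex $v$ of $T$ such that $R$ is also a region of $\mathbb{S}^2-\Delta_v$.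
   Context: A flag complex is a simplicial complex in which every complete subgraph of the 1-skeleton spans a simplex; a subcomplex is full if it contains every simplex whose vertices lie in it. Standing Assumptions on $\Delta\subset\mathbb{S}^2$: (1) connected, no separating vertex, no separating edge, contains an induced 4-cycle; (2) not a 4-cycle and not a cone on a 4-cycle. An induced 4-cycle $\sigma$ strongly separates $\Delta$ if $\Delta$ meets both components $U_1,U_2$ of $\mathbb{S}^2-\sigma$; then with $\Delta_i$ equal to $\sigma$ together with the components of $\Delta-\sigma$ in $U_i$, the pair $(\Delta_1,\Delta_2)$ is the strong visual decomposition along $\sigma$. $\Delta$ is prime if it is connected with no separating vertex or edge, is not a 4-cycle but contains an induced 4-cycle, and has no strongly separating induced 4-cycle. A region of $\mathbb{S}^2-\Delta$ is a connected component. *)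

(* Defs.v *)
From mathcomp Require Import all_boot all_algebra.

Set Implicit Arguments.
Unset Strict Implicit.
Unset Printing Implicit Defensive.

Local Open Scope ring_scope.

Section Complexes.
Variable n : nat.
Implicit Types (K L C : {set {set 'I_n}}) (W : {set 'I_n}).

Definition simplicial_complex K : Prop :=
  forall s, s \in K -> s != set0 /\
    (forall t : {set 'I_n}, t \subset s -> t != set0 -> t \in K).

Definition verts K : {set 'I_n} := [set v | [set v] \in K].

Definition edge K : rel 'I_n := fun u v => (u != v) && ([set u; v] \in K).

Definition flag K : Prop :=
  forall s : {set 'I_n}, s != set0 -> s \subset verts K ->
    (forall u v, u \in s -> v \in s -> u != v -> [set u; v] \in K) -> s \in K.

Definition subcomplex L K : Prop := simplicial_complex L /\ L \subset K.

Definition full L K : Prop :=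
  subcomplex L K /\ forall s, s \in K -> s \subset verts L -> s \in L.

Definition full_sub K W : {set {set 'I_n}} := [set s in K | s \subset W].

Definition connectedC K : Prop :=
  verts K != set0 /\
  forall u v, u \in verts K -> v \in verts K -> connect (edge K) u v.

Definition disconnectedC K : Prop :=
  exists u v, [/\ u \in verts K, v \in verts K & ~~ connect (edge K) u v].

Definition separating_vertex K : Prop :=
  exists v, v \in verts K /\ disconnectedC (full_sub K (verts K :\ v)).

Definition separating_edge K : Prop :=
  exists u v, edge K u v /\ disconnectedC (full_sub K (verts K :\: [set u; v])).

Definition induced_4cycle K C : Prop :=
  exists a b c d : 'I_n,
    [/\ uniq [:: a; b; c; d], C = full_sub K [set a; b; c; d],
        [&& edge K a b, edge K b c, edge K c d & edge K d a]
      & ~~ edge K a c && ~~ edge K b d].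

Definition is_4cycle K : Prop := induced_4cycle K K.

(* K is a cone on a 4-cycle (for flag K) *)
Definition cone_on_4cycle K : Prop :=
  exists x C, [/\ induced_4cycle K C, x \in verts K, x \notin verts C,
                  verts K = x |: verts C
                & forall y, y \in verts C -> edge K x y].
End Complexes.

From mathcomp Require Import all_classical all_reals all_analysis.
Import numFieldNormedType.Exports.

Section Geometry.
Local Open Scope classical_set_scope.
Variables (R : realType) (n : nat).
Implicit Types (K L C : {set {set 'I_n}}).

(* points of |K| in barycentric coordinates *)
Definition realization K : set 'rV[R]_n :=
  [set x | (forall i, 0 <= x ord0 i) /\ \sum_i x ord0 i = 1 /\
           finset (fun i => x ord0 i != 0) \in K].

Definition vtx (v : 'I_n) : 'rV[R]_n := \row_i (i == v)%:R.

Definition sphere2 : set 'rV[R]_3 := [set p | \sum_i (p ord0 i) ^+ 2 = 1].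

(* a topological embedding of |K| into S^2 (|K| is compact, so a continuous
   injection is a homeomorphism onto its image) *)
Definition embedding (f : 'rV[R]_n -> 'rV[R]_3) K : Prop :=
  [/\ {within realization K, continuous f},
      (forall x y, realization K x -> realization K y -> f x = f y -> x = y)
    & f @` realization K `<=` sphere2].

Definition img (f : 'rV[R]_n -> 'rV[R]_3) K : set 'rV[R]_3 :=
  f @` realization K.

Definition region (X U : set 'rV[R]_3) : Prop :=
  exists2 p, (sphere2 `\` X) p & U = connected_component (sphere2 `\` X) p.

Definition strong_visual_decomposition (f : 'rV[R]_n -> 'rV[R]_3)
    K C K1 K2 : Prop :=
  induced_4cycle K C /\
  exists U1 U2 : set 'rV[R]_3,
    [/\ region (img f C) U1, region (img f C) U2, U1 <> U2
       & sphere2 `\` img f C `<=` U1 `|` U2] /\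
    [/\ U1 `&` img f K !=set0, U2 `&` img f K !=set0,
        K1 = full_sub K (verts C :|: [set v in verts K | `[< U1 (f (vtx v)) >]])
      & K2 = full_sub K (verts C :|: [set v in verts K | `[< U2 (f (vtx v)) >]])].

Definition strongly_separates (f : 'rV[R]_n -> 'rV[R]_3) K C : Prop :=
  exists K1 K2, strong_visual_decomposition f K C K1 K2.

Definition prime_complex (f : 'rV[R]_n -> 'rV[R]_3) K : Prop :=
  [/\ connectedC K, ~ separating_vertex K, ~ separating_edge K,
      ~ is_4cycle K & (exists C, induced_4cycle K C)] /\
    ~ (exists C, induced_4cycle K C /\ strongly_separates f K C).

Definition standing_assumptions K : Prop :=
  [/\ connectedC K, ~ separating_vertex K, ~ separating_edge K,
      (exists C, induced_4cycle K C) & ~ is_4cycle K] /\ ~ cone_on_4cycle K.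
End Geometry.

Section Trees.
Variables (VT ET : finType) (ends : ET -> VT * VT).

Definition endpoints (e : ET) (u w : VT) : bool :=
  (ends e == (u, w)) || (ends e == (w, u)).

Definition tadj : rel VT := fun u w => [exists e, endpoints e u w].

Definition is_tree : Prop :=
  #|ET|.+1 = #|VT| /\ forall u w, connect tadj u w.

Definition tadj_without (e : ET) : rel VT :=
  fun u w => [exists e', (e' != e) && endpoints e' u w].

(* vertex set of the component of T minus the midpoint of e containing u *)
Definition side (e : ET) (u : VT) : {set VT} :=
  [set w | connect (tadj_without e) u w].
End Trees.

(* Main.v *)
Require Import Defs.
From mathcomp Require Import all_boot all_algebra.
From mathcomp Require Import all_classical all_reals all_analysis.
From mathcomp Require Import ring lra.
Import numFieldNormedType.Exports.
Section Helpers.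
Set Implicit Arguments.
Unset Strict Implicit.
Local Open Scope ring_scope.
Local Open Scope classical_set_scope.

Lemma seg_cont (R : realType) n (x y : 'rV[R]_n) : continuous (fun t : R => x + t *: (y - x)).
Proof.
move=> t.
apply: (@continuousD _ _ _ (fun=> x) (fun t : R => t *: (y - x))).
  exact: cst_continuous.
apply: continuousZr_tmp. by move=> z; apply: cvg_id.
Qed.

Lemma region_eq (R : realType) (X U : set 'rV[R]_3) q :
  region X U -> U q -> U = connected_component (@sphere2 R `\` X) q.
Proof.
by case=> p0 _ -> Hq; apply: same_connected_component.
Qed.

Lemma realiz_mono (R : realType) n (C D : {set {set 'I_n}}) :
  C \subset D -> @realization R n C `<=` @realization R n D.
Proof.
move=> CD x [h1 [h2 h3]]; split=> //; split=> //. exact: (fintype.subsetP CD _ h3).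
Qed.

Lemma img_mono (R : realType) n (f : 'rV[R]_n -> 'rV[R]_3) (C D : {set {set 'I_n}}) :
  C \subset D -> img f C `<=` img f D.
Proof. by move=> CD _ [x Hx <-]; exists x => //; apply: realiz_mono CD _ Hx. Qed.
Import order.Order.TTheory GRing.Theory Num.Theory.
Local Open Scope ring_scope.
Local Open Scope classical_set_scope.

Definition supp (R : realType) n (x : 'rV[R]_n) : {set 'I_n} :=
  [set i | x ord0 i != 0].
Arguments supp {R n}.

Lemma segment_pt (R : realType) n (K : {set {set 'I_n}}) (x : 'rV[R]_n) u t :
  simplicial_complex K -> realization K x -> u \in supp x -> 0 <= t <= 1 ->
  let z := x + t *: (vtx R u - x) in
  realization K z /\ u \in supp z /\ supp z \subset supp x.
Proof.
move=> hK [x0 [xs xK]] ux /andP [t0 t1] z.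
have zE : forall i, z ord0 i = (1 - t) * x ord0 i + t * (i == u)%:R.
  by move=> i; rewrite /z !mxE; ring.
have xu : 0 < x ord0 u.
  by rewrite lt_def; move: ux; rewrite inE => -> /=; apply: x0.
have uz : u \in supp z.
  rewrite inE zE eqxx mulr1; apply/lt0r_neq0.
  have [->|tp] := eqVneq t 0; first by rewrite subr0 mul1r addr0.
  have : 0 < t by rewrite lt_def tp t0.
  have : 0 <= (1 - t) * x ord0 u by apply: mulr_ge0; [rewrite subr_ge0 | exact: ltW].
  lra.
have sub : supp z \subset supp x.
  apply/fintype.subsetP => i; rewrite !inE zE.
  have [->|iu] := eqVneq i u; first by move=> _; move: ux; rewrite inE.
  by rewrite mulr0 addr0; apply: contra => /eqP ->; rewrite mulr0.
split; last by [].
split.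
  move=> i; rewrite zE; apply: addr_ge0; apply: mulr_ge0 => //.
  by rewrite subr_ge0.
split.
  under eq_bigr do rewrite zE.
  rewrite big_split /= -mulr_sumr -mulr_sumr xs.
  rewrite (bigD1 u) //= eqxx big1 ?addr0; first by rewrite mulr1 /= mulr1 subrK.
  by move=> i /negbTE ->.
have [_ hsub] := hK _ xK.
apply: hsub => //.
by apply/set0Pn; exists u.
Qed.

Lemma core (R : realType) n (K : {set {set 'I_n}}) (f : 'rV[R]_n -> 'rV[R]_3)
  (Q : {set 'I_n}) (D : {set {set 'I_n}}) (U1 U2 : set 'rV[R]_3) (V2 : {set 'I_n}) p x :
  simplicial_complex K -> embedding f K ->
  full_sub K Q \subset D -> D \subset K ->
  region (img f (full_sub K Q)) U1 -> region (img f (full_sub K Q)) U2 -> U1 <> U2 ->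
  (forall v, v \in V2 -> U2 (f (vtx R v))) ->
  U1 p ->
  realization K x -> supp x \subset verts (full_sub K Q) :|: V2 -> supp x \notin D ->
  connected_component (@sphere2 R `\` img f D) p (f x) -> False.
Proof.
move=> hK [fc finj fS] CD DK hU1 hU2 U12 hV2 U1p xK sV2 xD Wfx.
set C := full_sub K Q in CD hU1 hU2 sV2 *.
set W := connected_component _ p in Wfx.
have CK : C \subset K by exact: (fintype.subset_trans CD DK).
have imCD : img f C `<=` img f D by apply: img_mono.
have Wp : (@sphere2 R `\` img f D) p.
  apply: contrapT => np.
  by move: Wfx; rewrite /W connected_component_out.
have WU1 : W `<=` U1.
  rewrite (region_eq hU1 U1p); apply: connected_component_max.
  - exact: connected_component_refl.
  - move=> y /connected_component_sub [Sy ny]; split=> // hy; apply: ny.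
    exact: imCD.
  - exact: component_connected.
have U1fx : U1 (f x) by apply: WU1.
have xK' := xK; case: xK' => [_ [_ sK]].
have vertsC : forall w, w \in verts C -> w \in Q.
  by move=> w; rewrite inE inE => /andP [_ /fintype.subsetP]; apply; rewrite inE.
case: (boolP (supp x \subset verts C)) => [sC|/fintype.subsetPn [u ux uC]].
  case/negP: xD; apply: (fintype.subsetP CD).
  rewrite inE; apply/andP; split; first exact: sK.
  by apply/fintype.subsetP => w /(fintype.subsetP sC) /vertsC.
have uV2 : u \in V2.
  by move: (fintype.subsetP sV2 _ ux); rewrite finset.in_setU (negbTE uC).
have uK : [set u]%SET \in K.
  have [_ hs] := hK _ sK; apply: hs.
    by rewrite finset.sub1set.
  by apply/set0Pn; exists u; rewrite inE.
pose g t := x + t *: (vtx R u - x).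
pose A := g @` `[0, 1]%classic.
have Aseg : forall t, `[0, 1] t -> realization K (g t) /\ u \in supp (g t).
  move=> t; rewrite /= in_itv /= => t01.
  by have [? [? _]] := segment_pt hK xK ux t01.
have AK : A `<=` realization K by move=> _ [t /Aseg [? _] <-].
have Ac : connected (f @` A).
  apply: connected_continuous_connected.
    apply: connected_continuous_connected; first exact: segment_connected.
    by apply: continuous_subspaceT; apply: seg_cont.
  exact: continuous_subspaceW fc.
have AS : f @` A `<=` @sphere2 R `\` img f C.
  move=> _ [_ [t t01 <-] <-]; have [gK ug] := Aseg t t01; split.
    by apply: fS; exists (g t).
  case=> c cC fcE.
  have cK : realization K c by exact: (realiz_mono CK cC).
  have ceq := finj _ _ cK gK fcE.
  case: cC => [_ [_ cC]].
  move: cC; rewrite inE => /andP [_ /fintype.subsetP /(_ u)].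
  rewrite ceq => /(_ ug) uQ.
  by move/negP: uC; apply; rewrite inE inE uK finset.sub1set.
have g1 : g 1 = vtx R u by rewrite /g scale1r addrC subrK.
have g0 : g 0 = x by rewrite /g scale0r addr0.
have A1 : (f @` A) (f (vtx R u)).
  by exists (vtx R u) => //; exists 1 => //; rewrite /= in_itv /= ler01 lexx.
have A0 : (f @` A) (f x).
  by exists x => //; exists 0 => //; rewrite /= in_itv /= ler01 lexx.
have U2fx : U2 (f x).
  rewrite (region_eq hU2 (hV2 _ uV2)).
  by apply: (connected_component_max A1 AS Ac).
apply: U12.
by rewrite (region_eq hU1 U1fx) (region_eq hU2 U2fx).
Qed.

End Helpers.

Section Helpers2.
Set Implicit Arguments.
Unset Strict Implicit.

Lemma path_first (VT ET : finType) (ends : ET -> VT * VT) v w :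
  connect (tadj ends) v w -> v != w ->
  exists e, ((ends e).1 = v /\ w \in side ends e (ends e).2) \/
            ((ends e).2 = v /\ w \in side ends e (ends e).1).
Proof.
case/connectP => p pp ->.
case: (shortenP pp) => p' pp' up' _.
case: p' pp' up' => [|v1 q] /=; first by rewrite eqxx.
move=> /andP [/existsP [e he] pq] /andP [vq uq] _.
have vnot : v \notin v1 :: q by [].
have key : forall a qq, v \notin a :: qq -> path (tadj ends) a qq ->
    path (tadj_without ends e) a qq.
  move=> a qq; elim: qq a => [|b qq IH] a //= hv /andP [/existsP [e' he'] pb].
  rewrite IH ?andbT; last by [].
    apply/existsP; exists e'; rewrite he' andbT.
    apply/eqP => ee; subst e'.
    move: hv he he'; rewrite !inE /endpoints.
    case: (ends e) => a1 a2 /=.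
    case/norP => va /norP [vb _].
    by rewrite !xpair_eqE => /orP [] /andP [/eqP ?] /eqP ? ; subst;
      rewrite ?eqxx ?andbF ?andFb ?orbF //= ?(negbTE va) ?(negbTE vb) ?andbF.
  by move: hv; rewrite !inE negb_or => /andP [_].
have c1 : last v1 q \in side ends e v1.
  by rewrite inE; apply/connectP; exists q => //; apply: key.
exists e; move: he; rewrite /endpoints.
case/orP => /eqP ->; [left|right] => //.
Qed.

Lemma pigeon (VT ET : finType) (bad : ET -> VT) :
  #|ET|.+1 = #|VT| -> exists v, forall e, bad e != v.
Proof.
move=> hc.
have : ~~ ([set: VT] \subset [set bad e | e in ET]).
  apply/negP => /subset_leq_card; rewrite cardsT -hc.
  by move=> h; have := leq_trans h (leq_imset_card _ _); rewrite ltnn.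
case/fintype.subsetPn => v _ nv; exists v => e; apply/eqP => be.
by move/negP: nv; apply; rewrite -be; apply: imset_f.
Qed.

End Helpers2.

Theorem lemma4p15 (R : realType) (n : nat) (K : {set {set 'I_n}})
    (f : 'rV[R]_n -> 'rV[R]_3) (VT ET : finType) (ends : ET -> VT * VT)
    (Dv : VT -> {set {set 'I_n}}) (De : ET -> {set {set 'I_n}}) :
  simplicial_complex K -> flag K -> embedding f K ->
  standing_assumptions K ->
  is_tree ends ->
  (forall v, full (Dv v) K /\ prime_complex f (Dv v)) ->
  injective Dv ->
  \bigcup_(v : VT) Dv v = K ->
  (forall e, induced_4cycle K (De e)) ->
  injective De ->
  (forall e v1 v2, endpoints ends e v1 v2 <-> Dv v1 :&: Dv v2 = De e) ->
  (forall e, strong_visual_decomposition f K (De e)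
               (\bigcup_(v in side ends e (ends e).1) Dv v)
               (\bigcup_(v in side ends e (ends e).2) Dv v)) ->
  forall U : set 'rV[R]_3, region (img f K) U ->
  exists v : VT, region (img f (Dv v)) U.
Proof.
move=> hK _ hf _ [hcard hconn] hDv _ hcup hDe _ hiff hsvd U [p [Sp npK] UE].
pose Good1 e := exists U1 U2 : set 'rV[R]_3,
    ([/\ region (img f (De e)) U1, region (img f (De e)) U2, U1 <> U2
       & (@sphere2 R `\` img f (De e) `<=` U1 `|` U2)%classic] /\
    [/\ (U1 `&` img f K !=set0)%classic, (U2 `&` img f K !=set0)%classic,
        \bigcup_(v in side ends e (ends e).1) Dv v =
          full_sub K (verts (De e) :|: [set v in verts K | `[< U1 (f (vtx R v)) >]])
      & \bigcup_(v in side ends e (ends e).2) Dv v =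
          full_sub K (verts (De e) :|: [set v in verts K | `[< U2 (f (vtx R v)) >]])])
    /\ U1 p.
pose bad e := if `[< Good1 e >] then (ends e).2 else (ends e).1.
have [v hv] := pigeon bad hcard.
have DvK : forall w, Dv w \subset K by move=> w; case: (hDv w) => [[[_ ?] _] _].
have DeDv1 : forall e, De e \subset Dv (ends e).1.
  move=> e; rewrite -(proj1 (hiff e (ends e).1 (ends e).2)); first exact: subsetIl.
  by rewrite /endpoints -surjective_pairing eqxx.
have DeDv2 : forall e, De e \subset Dv (ends e).2.
  move=> e; rewrite -(proj1 (hiff e (ends e).1 (ends e).2)); first exact: subsetIr.
  by rewrite /endpoints -surjective_pairing eqxx.
have npv : ~ img f (Dv v) p by move=> h; apply: npK; exact: (img_mono (DvK v) h).
exists v; exists p; first by [].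
rewrite UE; apply/seteqP; split.
  apply: connected_component_max.
  - exact: connected_component_refl.
  - move=> y /connected_component_sub [Sy ny]; split=> // h; apply: ny.
    exact: (img_mono (DvK v) h).
  - exact: component_connected.
apply: connected_component_max.
- exact: connected_component_refl.
- move=> y Wy; have := connected_component_sub Wy; case=> Sy ny; split=> // hy.
  case: hy => x xK fxy; subst y.
  have xK' := xK; case: xK' => [_ [_ sK]].
  case: (boolP (supp x \in Dv v)) => sv.
    by apply: ny; exists x => //; case: xK => [? [? _]]; split.
  move: sK; rewrite -hcup => /bigcupP [w _ sw].
  have wv : v != w by apply: contraNneq sv => ->.
  have app : forall e (U1 U2 : set 'rV[R]_3) (Ks : {set {set 'I_n}}),
      De e \subset Dv v ->
      region (img f (De e)) U1 -> region (img f (De e)) U2 -> U1 <> U2 -> U1 p ->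
      Ks = full_sub K (verts (De e) :|: [set v in verts K | `[< U2 (f (vtx R v)) >]]) ->
      supp x \in Ks -> False.
    move=> e U1 U2 Ks DeD r1 r2 U12 U1p KsE sKs.
    have [a [b [c [d [_ DeE _ _]]]]] := hDe e.
    rewrite DeE in DeD r1 r2 KsE.
    apply: (core (V2 := [set v in verts K | `[< U2 (f (vtx R v)) >]]) hK hf DeD (DvK v) r1 r2 U12 _ U1p xK _ sv Wy).
      by move=> u; rewrite inE => /andP [_ /asboolP].
    by move: sKs; rewrite KsE inE => /andP [_].
  have [e [[e1 we]|[e2 we]]] := path_first (hconn v w) wv.
  + have G : Good1 e.
      apply: contrapT => nG; move: (hv e); rewrite /bad.
      by case: asboolP => // _; rewrite e1 eqxx.
    case: G => U1 [U2 [[[r1 r2 U12 _] [_ _ _ K2E]] U1p]].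
    apply: (app e U1 U2 _ _ r1 r2 U12 U1p K2E); first by rewrite -e1.
    by apply/bigcupP; exists w.
  + have nG : ~ Good1 e.
      move=> G; move: (hv e); rewrite /bad.
      by case: asboolP => // _; rewrite e2 eqxx.
    case: (hsvd e) => _ [U1 [U2 [[r1 r2 U12 cov] [i1 i2 K1E K2E]]]].
    have U2p : U2 p.
      have : (@sphere2 R `\` img f (De e))%classic p.
        split=> // h; apply: npK.
        by apply: (img_mono (fintype.subset_trans (DeDv1 e) (DvK _)) h).
      case/cov => // U1p; case: nG; exists U1, U2; split=> //; split=> //.
    apply: (app e U2 U1 _ _ r2 r1 (nesym U12) U2p K1E); first by rewrite -e2.
    by apply/bigcupP; exists w.
- exact: component_connected.
Qed.
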